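(* Let $k>1$, $F=F(a_1,\dots,a_k)$, let $0<\lambda<1/3$ and let $\tau$ be a nontrivial relabeling automorphism of $F$. Let $S'(\lambda,\tau)$ be the set of all cyclically reduced words $x$ such that $x$ and some cyclic permutation of $\tau(x^{-1})$ have a common initial segment of length $\ge\lambda|x|$. Then $S'(\lambda,\tau)$ is exponentially $CR$-negligible.
   Context: $A_{2k}=\{a_1^{\pm1},\dots,a_k^{\pm1}\}$; $F$ is identified with the set of freely reduced words over $A_{2k}$, and $CR\subseteq F$ is the set of cyclically reduced words. An automorphism $\tau$ of $F$ is a relabeling automorphism if its restriction to $A_{2k}$ is a permutation of $A_{2k}$. For $S\subseteq F$, $\rho(n,S)$ is the number of $x\in S$ with $|x|\le n$. For $S\subseteq Q\subseteq F$, $S$ is exponentially $Q$-generic if there are $C>0$ and $0<\sigma<1$ with $|\rho(n,S)/\rho(n,Q)-1|\le C\sigma^n$ for all $n$; $S$ is exponentially $Q$-negligible if $Q\setminus S$ is exponentially $Q$-generic. *)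

(* Defs.v *)
From HB Require Import structures.
From mathcomp Require Import all_boot all_order all_algebra.
From mathcomp Require Import fingroup perm.
From Stdlib Require Rdefinitions.
Notation R := Rdefinitions.R.
From mathcomp Require Import Rstruct.
Set Implicit Arguments. Unset Strict Implicit. Unset Printing Implicit Defensive.
Import Order.TTheory GRing.Theory Num.Theory.
Local Open Scope ring_scope.

(* Letters of A_{2k}: (i, false) = a_(i+1), (i, true) = a_(i+1)^{-1}. *)
Definition letter (k : nat) : finType := ('I_k * bool)%type.
Definition linv k (a : letter k) : letter k := (a.1, ~~ a.2).

(* Words over A_{2k}; elements of F are the freely reduced words. *)
Definition word k := seq (letter k).
Definition winv k (w : word k) : word k := rev (map (@linv k) w).

Definition freely_reduced k (w : word k) : bool :=
  sorted (fun a b => b != linv a) w.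

Definition cyc_reduced k (w : word k) : bool :=
  freely_reduced w &&
  (if w is a :: _ then last a w != linv a else true).

(* A relabeling automorphism is determined by its restriction to A_{2k},
   a permutation p of the letters compatible with inversion. *)
Definition relabeling k (p : {perm letter k}) : Prop :=
  forall a, p (linv a) = linv (p a).

Definition apply_relab k (p : {perm letter k}) (w : word k) : word k := map p w.

Definition rho k (n : nat) (S : pred (word k)) : nat :=
  \sum_(l < n.+1) #|[set t : l.-tuple (letter k) | S (tval t)]|.

Definition exp_generic k (S Q : pred (word k)) : Prop :=
  exists C : R, exists sigma : R, 0 < C /\ 0 < sigma < 1 /\
    forall n : nat,
      `| (rho n S)%:R / (rho n Q)%:R - 1 | <= C * sigma ^+ n.

Definition exp_negligible k (S Q : pred (word k)) : Prop :=
  exp_generic [pred x | Q x && ~~ S x] Q.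

Definition Sprime k (lam : R) (p : {perm letter k}) : pred (word k) :=
  [pred x | cyc_reduced x &&
     [exists i : 'I_(size x).+1, [exists m : 'I_(size x).+1,
        (lam * (size x)%:R <= (m : nat)%:R) &&
        (take m x == take m (rot i (apply_relab p (winv x))))]]].

(* Main.v *)
Require Import Defs.
From HB Require Import structures.
From mathcomp Require Import all_boot all_order all_algebra.
From mathcomp Require Import fingroup perm.
From mathcomp Require Import Rstruct.
From mathcomp Require Import zify ring lra.
Import Order.TTheory GRing.Theory Num.Theory.
Set Implicit Arguments. Unset Strict Implicit. Unset Printing Implicit Defensive.

Fixpoint Wd k (n : nat) : seq (word k) :=
  if n is n'.+1 then [seq a :: w | a <- enum (letter k), w <- Wd k n'] else [:: [::]].

Lemma mem_Wd k n (w : word k) : (w \in Wd k n) = (size w == n).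
Proof.
elim: n w => [|n IH] [|a w] //=.
  apply/allpairsP => -[[b v] /= [_ _ H]] //.
apply/allpairsP/idP.
  by case=> -[b v] /= [_]; rewrite IH => /eqP <- [_ ->].
by move=> Hs; exists (a, w) => /=; rewrite mem_enum IH.
Qed.

Lemma uniq_Wd k n : uniq (Wd k n).
Proof.
elim: n => [|n IH] //=.
apply: allpairs_uniq => //; first exact: enum_uniq.
by move=> [a w] [b v] _ _ /= [-> ->].
Qed.

Lemma cnt_Wd k n (P : pred (word k)) :
  #|[set t : n.-tuple (letter k) | P (tval t)]| = count P (Wd k n).
Proof.
rewrite cardsE cardE /enum_mem size_filter.
rewrite -(count_map (@tval n (letter k)) P).
match goal with |- context [count _ (map _ ?s)] => have E : perm_eq (map (@tval n (letter k)) s) (Wd k n) end; [apply/uniq_perm|by move/seq.permP: E ->].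
- rewrite map_inj_uniq; last exact: val_inj.
  by rewrite -enumT enum_uniq.
- exact: uniq_Wd.
move=> w; rewrite mem_Wd; apply/mapP/idP.
  by case=> t _ ->; rewrite size_tuple.
move=> /eqP H; exists (Tuple (introT eqP H)) => //.
by rewrite /= -enumT mem_enum.
Qed.

Lemma count_Wd_S k n (P : pred (word k)) :
  count P (Wd k n.+1) = \sum_(a : letter k) count (fun w => P (a :: w)) (Wd k n).
Proof.
rewrite /= /allpairs count_flatten sumnE big_map /=.
rewrite big_map big_enum /=.
by apply: eq_bigr => a _; rewrite count_map.
Qed.

Definition headok k (a : letter k) (w : word k) : bool :=
  if w is c :: _ then c != a else true.

Lemma FR_cons k (b : letter k) w :
  freely_reduced (b :: w) = headok (linv b) w && freely_reduced w.
Proof. by case: w. Qed.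

Lemma card_letter k : #|letter k| = (k * 2)%N.
Proof. by rewrite card_prod card_ord card_bool. Qed.

Lemma sum_neq k (a : letter k) X :
  (\sum_(b : letter k) (b != a) * X = (k * 2).-1 * X)%N.
Proof.
rewrite (eq_bigr (fun b => if b != a then X else 0%N)); last first.
  by move=> b _; case: (b != a); rewrite ?mul1n ?mul0n.
rewrite -big_mkcond /= sum_nat_const.
by rewrite -(card_letter k) -(cardC1 a).
Qed.

Lemma count_andl T (c : bool) (Q : pred T) s :
  count (fun w => c && Q w) s = (c * count Q s)%N.
Proof. by case: c => /=; rewrite ?mul1n ?mul0n // count_pred0. Qed.

Lemma G_count k n (a : letter k) :
  count (fun w => freely_reduced w && headok a w) (Wd k n) = ((k * 2).-1 ^ n)%N.
Proof.
elim: n a => [|n IH] a; first by [].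
rewrite count_Wd_S.
rewrite (eq_bigr (fun b => (b != a) * (k * 2).-1 ^ n)%N); last first.
  move=> b _.
  rewrite (eq_count (a2 := fun w => (b != a) && (freely_reduced w && headok (linv b) w))); last first.
    by move=> w; rewrite (FR_cons b w) /=; case: (b != a); case: (headok (linv b) w); case: (freely_reduced w).
  by rewrite count_andl IH.
by rewrite sum_neq expnS.
Qed.

Lemma FR_count k n :
  count (@freely_reduced k) (Wd k n.+1) = (k * 2 * (k * 2).-1 ^ n)%N.
Proof.
rewrite count_Wd_S.
rewrite (eq_bigr (fun b => (k * 2).-1 ^ n)%N); last first.
  move=> b _; rewrite -(G_count n (linv b)); apply: eq_count => w.
  by rewrite FR_cons andbC.
by rewrite sum_nat_const card_letter.
Qed.

Lemma FR_upper k n : (0 < k)%N ->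
  (count (@freely_reduced k) (Wd k n) <= 2 * (k * 2).-1 ^ n)%N.
Proof.
move=> k0; case: n => [|n]; first by [].
rewrite FR_count expnS mulnA leq_mul2r; apply/orP; right; lia.
Qed.

Lemma FR_lower k n : (0 < k)%N ->
  ((k * 2).-1 ^ n <= count (@freely_reduced k) (Wd k n))%N.
Proof.
move=> k0; case: n => [|n]; first by [].
rewrite FR_count expnS leq_mul2r; apply/orP; right; lia.
Qed.

Lemma count_inj (T1 T2 : eqType) (P : pred T1) (Q : pred T2) s1 s2 (f : T1 -> T2) :
  uniq s1 -> {in [seq x <- s1 | P x] &, injective f} ->
  (forall x, x \in s1 -> P x -> (f x \in s2) && Q (f x)) ->
  (count P s1 <= count Q s2)%N.
Proof.
move=> u1 inj H.
rewrite -!size_filter -(size_map f).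
apply: uniq_leq_size.
  by rewrite map_inj_in_uniq // filter_uniq.
move=> y /mapP [x]; rewrite mem_filter => /andP [Px xs] ->.
by rewrite mem_filter; have /andP [-> ->] := H x xs Px.
Qed.

Definition pickz k (u v : letter k) : letter k :=
  odflt u [pick z | (z != u) && (z != v)].

Lemma pickzP k (u v : letter k) : (1 < k)%N -> (pickz u v != u) && (pickz u v != v).
Proof.
move=> k1; rewrite /pickz; case: pickP => [z -> //|H].
have : (#|letter k| <= #|[set u; v]|)%N.
  apply: subset_leq_card; apply/subsetP => z _.
  by move: (H z); rewrite !inE; case: (z == u); case: (z == v).
rewrite card_letter cards2; case: (u != v) => /=; lia.
Qed.

Definition extw k (d : letter k) (w : word k) : word k :=
  match w with
  | [::] => [:: d]
  | a :: w' => rcons w (pickz (linv (last a w')) (linv a))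
  end.

Lemma linv_neq k (a : letter k) : (a != linv a).
Proof. by case: a => i b; rewrite /linv /= xpair_eqE /=; case: b; rewrite eqxx. Qed.

Lemma extw_CR k d (w : word k) : (1 < k)%N -> freely_reduced w -> cyc_reduced (extw d w).
Proof.
move=> k1; case: w => [|a w] FR.
  by rewrite /cyc_reduced /= linv_neq.
have /andP [H1 H2] := pickzP (linv (last a w)) (linv a) k1.
rewrite /extw /cyc_reduced rcons_cons /= last_rcons H2 andbT.
rewrite /freely_reduced /= rcons_path.
by move: FR; rewrite /freely_reduced /= => -> /=.
Qed.

Lemma CR_lower k n : (1 < k)%N ->
  ((k * 2).-1 ^ n <= (k * 2).-1 * count (@cyc_reduced k) (Wd k n))%N.
Proof.
move=> k1; have k0 : (0 < k)%N by lia.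
case: n => [|n].
  rewrite /= expn0 addn0 /cyc_reduced /=; lia.
rewrite expnS leq_mul2l; apply/orP; right.
apply: leq_trans (FR_lower n k0) _.
set d : letter k := (Ordinal k0, false).
apply: (count_inj (f := extw d)); first exact: uniq_Wd.
  move=> [|a w] [|b v]; rewrite !mem_filter !mem_Wd => /andP [_ /eqP s1] /andP [_ /eqP s2] //=.
  - by rewrite -s2 in s1.
  - by rewrite -s2 in s1.
  by case=> -> /rcons_inj [->].
move=> w; rewrite mem_Wd => /eqP sw FR.
rewrite extw_CR // andbT mem_Wd.
by case: w sw FR => [|a w] /= <-; rewrite ?size_rcons.
Qed.

Lemma nth_rot_mod (T : Type) (x0 : T) n (s : seq T) j :
  (n <= size s)%N -> (j < size s)%N -> nth x0 (rot n s) j = nth x0 s ((j + n) %% size s).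
Proof.
move=> ns js; rewrite /rot nth_cat size_drop.
case: ifP => H.
  by rewrite nth_drop modn_small; [rewrite addnC|lia].
rewrite nth_take; last by lia.
have -> : ((j + n) %% size s = j - (size s - n))%N.
  have -> : (j + n = (j - (size s - n)) + size s)%N by lia.
  by rewrite modnDr modn_small; lia.
by [].
Qed.

Definition rr l i j := (l - ((j + i) %% l).+1)%N.

Lemma rr_lt l i j : (0 < l)%N -> (rr l i j < l)%N.
Proof. move=> l0; rewrite /rr; lia. Qed.

Lemma rr_dvd l i j : (0 < l)%N -> (l %| i + j + rr l i j + 1)%N.
Proof.
move=> l0; rewrite /rr.
have := ltn_pmod (j + i) l0.
have E := divn_eq (j + i) l.
move: ((j + i) %% l)%N ((j + i) %/ l)%N E => r q E rl.
have -> : (i + j + (l - r.+1) + 1 = q.+1 * l)%N by lia.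
exact: dvdn_mull.
Qed.

Definition sigp k (p : {perm letter k}) (a : letter k) := p (linv a).

Definition good_idx l H i a :=
  (a + H <= l)%N && [forall j : 'I_H, forall j' : 'I_H, ~~ (l %| i + (a + j) + (a + j') + 1)%N].

Definition Qp k (d : letter k) (p : {perm letter k}) l H i a : pred (word k) :=
  fun x => [&& size x == l, freely_reduced x, good_idx l H i a &
    [forall j : 'I_H, nth d x (a + j) == sigp p (nth d x (rr l i (a + j)))]].

Lemma Qp_inj k d p l H i a (x x' : word k) :
  Qp d p l H i a x -> Qp d p l H i a x' ->
  take a x = take a x' -> drop (a + H) x = drop (a + H) x' -> x = x'.
Proof.
move=> /and4P [/eqP sx _ /andP [aHl gi] fx] /and4P [/eqP sx' _ _ fx'] ET ED.
have out q : (q < l)%N -> (q < a)%N || (a + H <= q)%N -> nth d x q = nth d x' q.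
  move=> ql /orP [qa|qa].
    by rewrite -(nth_take d qa x) ET nth_take.
  have -> : q = (a + H + (q - (a + H)))%N by lia.
  by rewrite -!nth_drop ED.
apply: (eq_from_nth (x0 := d)); first by rewrite sx sx'.
move=> q; rewrite sx => ql.
case: (boolP ((q < a) || (a + H <= q))%N) => qo; first exact: out.
move: qo; rewrite negb_or -leqNgt -ltnNge => /andP [qa1 qa2].
have tH : (q - a < H)%N by lia.
have -> : q = (a + Ordinal tH)%N by rewrite /=; lia.
have l0 : (0 < l)%N by lia.
rewrite (eqP (forallP fx (Ordinal tH))) (eqP (forallP fx' (Ordinal tH))).
have zl := rr_lt i (a + Ordinal tH) l0.
have zd := rr_dvd i (a + Ordinal tH) l0.
move: (rr l i (a + Ordinal tH)) zl zd => z zl zd.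
congr (sigp p _); apply: out; first exact: zl.
apply/negPn/negP; rewrite negb_or -leqNgt -ltnNge => /andP [Hin1 Hin2].
have tH' : (z - a < H)%N by lia.
have := forallP (forallP gi (Ordinal tH)) (Ordinal tH').
have -> : (a + Ordinal tH' = z)%N by rewrite /=; lia.
by rewrite zd.
Qed.

Lemma FR_take k n (x : word k) : freely_reduced x -> freely_reduced (take n x).
Proof. by rewrite /freely_reduced -{1}(cat_take_drop n x) => /cat_sorted2 []. Qed.

Lemma FR_drop k n (x : word k) : freely_reduced x -> freely_reduced (drop n x).
Proof. by rewrite /freely_reduced -{1}(cat_take_drop n x) => /cat_sorted2 []. Qed.

Lemma Qp_count k d p l H i a : (0 < k)%N ->
  (count (Qp d p l H i a) (Wd k l) <= 4 * (k * 2).-1 ^ (l - H))%N.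
Proof.
move=> k0.
case: (boolP (good_idx l H i a)) => gi; last first.
  by rewrite (eq_count (a2 := pred0)) ?count_pred0 // => x; rewrite /Qp (negbTE gi) !andbF.
have aHl : (a + H <= l)%N by case/andP: gi.
pose s2 := [seq (u, v) | u <- [seq u <- Wd k a | freely_reduced u],
                         v <- [seq v <- Wd k (l - (a + H)) | freely_reduced v]].
apply: (@leq_trans (count predT s2)).
  apply: (count_inj (f := fun x => (take a x, drop (a + H) x))); first exact: uniq_Wd.
    move=> x x'; rewrite !mem_filter => /andP [Qx _] /andP [Qx' _] [E1 E2].
    exact: (Qp_inj Qx Qx').
  move=> x _ /and4P [/eqP sx FRx _ _] /=; rewrite andbT.
  apply/allpairsP; exists (take a x, drop (a + H) x) => /=; split => //.
    have ax : (a <= size x)%N by rewrite sx; lia.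
    rewrite mem_filter FR_take // mem_Wd size_takel //. by rewrite eqxx.
  rewrite mem_filter FR_drop // mem_Wd size_drop sx. by rewrite eqxx.
rewrite count_predT size_allpairs !size_filter.
have -> : (l - H = a + (l - (a + H)))%N by lia.
rewrite expnD.
apply: leq_trans (leq_mul (FR_upper a k0) (FR_upper _ k0)) _.
by rewrite mulnACA.
Qed.

Lemma key_lem k d p (x : word k) i m j :
  (i <= size x)%N -> (j < m)%N -> (j < size x)%N ->
  take m x = take m (rot i (apply_relab p (winv x))) ->
  nth d x j = sigp p (nth d x (rr (size x) i j)).
Proof.
move=> il jm jl E.
rewrite -(nth_take d jm x) E nth_take //.
have sy : size (apply_relab p (winv x)) = size x by rewrite /apply_relab /winv size_map size_rev size_map.
rewrite nth_rot_mod ?sy //.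
have l0 : (0 < size x)%N by lia.
have tl := ltn_pmod (j + i) l0.
rewrite /apply_relab /winv (nth_map d) ?size_rev ?size_map //.
rewrite nth_rev; last by rewrite size_map.
rewrite size_map (nth_map d); last by lia.
by [].
Qed.

Lemma cover_lem k d p (x : word k) l dd i m :
  (2 <= dd)%N -> size x = l -> freely_reduced x ->
  (i <= l)%N -> (m <= l)%N -> (l <= dd * m)%N ->
  take m x = take m (rot i (apply_relab p (winv x))) ->
  exists a, (a <= l)%N /\ Qp d p l ((l - 3 * dd) %/ (3 * dd)) i a x.
Proof.
move=> d2 sx FRx il ml ldm E.
set H := ((l - 3 * dd) %/ (3 * dd))%N.
have HD : (H * (3 * dd) <= l - 3 * dd)%N by apply: leq_trunc_div.
have H3 : (3 * H <= m)%N.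
  have : (3 * H * dd <= m * dd)%N by nia.
  by rewrite leq_pmul2r //; lia.
have H6 : (6 * H <= l)%N by nia.
set m' := minn m (l %/ 2).
set h := (m' %/ 3)%N.
have Hh : (H <= h)%N by rewrite /h /m'; lia.
have hl : (6 * h <= l)%N by rewrite /h /m'; lia.
have h3 : (3 * h <= m')%N by rewrite /h; lia.
have K j : (j < m')%N -> nth d x j = sigp p (nth d x (rr l i j)).
  move=> jm; rewrite -sx; apply: (key_lem d _ _ _ E); rewrite ?sx //; rewrite /m' in jm; lia.
case: (boolP [exists j0 : 'I_h, exists j1 : 'I_h, l %| i + j0 + j1 + 1]%N).
  case/existsP => j0 /existsP [j1 Hd].
  have j0h := ltn_ord j0; have j1h := ltn_ord j1.
  exists (j0 + j1 + 1)%N; split; first by lia.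
  apply/and4P; split => //; first by rewrite sx.
    apply/andP; split; first by lia.
    apply/forallP => t; apply/forallP => t'.
    have th := ltn_ord t; have th' := ltn_ord t'.
    have -> : (i + (j0 + j1 + 1 + t) + (j0 + j1 + 1 + t') + 1 =
               (i + j0 + j1 + 1) + (j0 + j1 + 2 + t + t'))%N.
      move: (nat_of_ord t) (nat_of_ord t') (nat_of_ord j0) (nat_of_ord j1) => a1 a2 a3 a4; lia.
    rewrite dvdn_addr //; apply/negP => /dvdn_leq.
    move: th th' j0h j1h; move: (nat_of_ord t) (nat_of_ord t') (nat_of_ord j0) (nat_of_ord j1) => a1 a2 a3 a4.
    lia.
  apply/forallP => t; apply/eqP; apply: K.
  have th := ltn_ord t; lia.
move/existsPn => Hn.
exists 0%N; split => //.
apply/and4P; split => //; first by rewrite sx.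
  apply/andP; split; first by lia.
  apply/forallP => t; apply/forallP => t'.
  have th : (t < h)%N by have := ltn_ord t; lia.
  have th' : (t' < h)%N by have := ltn_ord t'; lia.
  by have := existsPn (Hn (Ordinal th)) (Ordinal th').
apply/forallP => t; apply/eqP; apply: K.
have th := ltn_ord t; rewrite add0n; lia.
Qed.

Lemma count_cover (T : eqType) (P : pred T) (Q : nat -> nat -> pred T) N s :
  (forall x, x \in s -> P x -> exists i a, [/\ (i < N)%N, (a < N)%N & Q i a x]) ->
  (count P s <= \sum_(i < N) \sum_(a < N) count (Q i a) s)%N.
Proof.
elim: s => [|x s IH] H; first by [].
rewrite /= (eq_bigr (fun i : 'I_N => \sum_(a < N) (Q i a x : nat) + \sum_(a < N) count (Q i a) s)%N); last first.
  by move=> i _; rewrite -big_split.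
rewrite big_split /=.
apply: leq_add; last first.
  by apply: IH => y ys; apply: H; rewrite inE ys orbT.
case: (boolP (P x)) => Px //.
have [i [a [iN aN Qx]]] := H x (mem_head _ _) Px.
rewrite (bigD1 (Ordinal iN)) //= (bigD1 (Ordinal aN)) //= Qx.
rewrite -addnA; exact: leq_addr.
Qed.

Definition bad k (lam : R) (p : {perm letter k}) : pred (word k) :=
  fun x => cyc_reduced x && Sprime lam p x.

Definition HH dd l := ((l - 3 * dd) %/ (3 * dd))%N.

Lemma bad_count k (lam : R) p dd l :
  (1 < k)%N -> (2 <= dd)%N -> (0 <= lam)%R -> (1 <= dd%:R * lam)%R ->
  (count (bad lam p) (Wd k l) <= l.+1 * l.+1 * (4 * (k * 2).-1 ^ (l - HH dd l)))%N.
Proof.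
move=> k1 d2 lam0 dlam.
have k0 : (0 < k)%N by lia.
set d : letter k := (Ordinal k0, false).
apply: leq_trans (count_cover (Q := fun i a => Qp d p l (HH dd l) i a) (N := l.+1) _ ) _.
  move=> x; rewrite mem_Wd => /eqP sx /andP [CRx /andP [_ /existsP [i /existsP [m /andP [lm /eqP E]]]]].
  have FRx : freely_reduced x by case/andP: CRx.
  have il : (i <= l)%N by rewrite -sx -ltnS.
  have ml : (m <= l)%N by rewrite -sx -ltnS.
  have ldm : (l <= dd * m)%N.
    rewrite -(ler_nat R) natrM -sx.
    apply: le_trans (_ : (dd%:R * lam * (size x)%:R <= _)%R).
      by rewrite -[X in (X <= _)%R](mul1r ((size x)%:R)%R) ler_wpM2r.
    by rewrite -mulrA ler_wpM2l.
  have [a [al Q]] := cover_lem d d2 sx FRx il ml ldm E.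
  by exists i, a; split; [lia|lia|exact: Q].
apply: (@leq_trans (\sum_(i < l.+1) \sum_(a < l.+1) (4 * (k*2).-1 ^ (l - HH dd l)))%N).
  by apply: leq_sum => i _; apply: leq_sum => a _; exact: Qp_count.
by rewrite !sum_nat_const !card_ord mulnA.
Qed.

Local Open Scope ring_scope.

Lemma bernoulli (F : realFieldType) (x : F) n : -1 <= x -> 1 + n%:R * x <= (1 + x) ^+ n.
Proof.
move=> x1; elim: n => [|n IH]; first by rewrite mul0r addr0 expr0.
rewrite exprS -natr1.
have h0 : 0 <= 1 + x by lra.
apply: le_trans (_ : (1 + x) * (1 + n%:R * x) <= _); last by rewrite ler_wpM2l.
have : 0 <= n%:R * x ^+ 2 :> F by rewrite mulr_ge0 ?sqr_ge0.
rewrite expr2; nra.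
Qed.

Lemma theta_pow (F : realFieldType) (D : nat) : (0 < D)%N ->
  (1 + (2 * D%:R)^-1) ^+ D <= 2 :> F.
Proof.
move=> D0.
have Dp : 0 < D%:R :> F by rewrite ltr0n.
set e := (2 * D%:R)^-1.
have e0 : 0 < e by rewrite invr_gt0; lra.
have De : D%:R * e = 2^-1.
  rewrite /e invfM mulrCA mulfV ?mulr1 //; lra.
have e1 : e <= 2^-1.
  have : 1 <= D%:R :> F by rewrite ler1n.
  move=> H; rewrite -De; nra.
have B := bernoulli D (_ : -1 <= - e).
have B' : 2^-1 <= (1 - e) ^+ D by move: (B ltac:(lra)); rewrite mulrN De; lra.
have P : (1 + e) ^+ D * (1 - e) ^+ D <= 1.
  rewrite -exprMn; apply: exprn_ile1; nra.
have q0 : 0 <= (1 + e) ^+ D by rewrite exprn_ge0 //; lra.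
nra.
Qed.

Lemma poly_exp (F : realFieldType) (e : F) n : 0 < e ->
  n.+1%:R ^+ 3 <= e^-3 * ((1 + e) ^+ 3) ^+ n.+1.
Proof.
move=> e0.
have B : n.+1%:R * e <= (1 + e) ^+ n.+1.
  have := bernoulli n.+1 (_ : -1 <= e); lra.
have B3 : (n.+1%:R * e) ^+ 3 <= ((1 + e) ^+ n.+1) ^+ 3.
  apply: lerXn2r => //; rewrite qualifE /=; [rewrite mulr_ge0 //; lra|].
  by rewrite exprn_ge0 //; lra.
have e3 : 0 < e ^+ 3 by rewrite exprn_gt0.
rewrite -exprM mulnC exprM mulrC ler_pdivlMr // -exprMn.
exact: B3.
Qed.

Lemma pow_bound (F : realFieldType) (K : nat) (th : F) D l H n :
  1 <= th -> th <= K%:R -> th ^+ D <= K%:R -> (l <= n)%N -> (l <= D * (H + 2))%N -> (H <= l)%N ->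
  (K ^ (l - H))%:R * th ^+ n <= K%:R ^+ (n + 2) :> F.
Proof.
move=> t1 tK tD ln lD Hl.
have t0 : 0 <= th by lra.
have K0 : 0 <= K%:R :> F by [].
have -> : n = (l + (n - l))%N by lia.
rewrite exprD natrX.
have A : th ^+ l <= K%:R ^+ (H + 2).
  apply: le_trans (ler_weXn2l t1 lD) _.
  rewrite exprM; apply: lerXn2r => //; rewrite qualifE /= ?exprn_ge0 //.
have B : th ^+ (n - l) <= K%:R ^+ (n - l).
  by apply: lerXn2r => //; rewrite qualifE /= ?exprn_ge0.
have -> : (l + (n - l) + 2 = (l - H) + ((H + 2) + (n - l)))%N by lia.
rewrite [X in _ <= X]exprD [X in _ <= _ * X]exprD.
apply: ler_wpM2l; first exact: exprn_ge0.
apply: ler_pM => //; exact: exprn_ge0.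
Qed.

Local Open Scope ring_scope.

Lemma count_split T (a b : pred T) s :
  count a s = (count (fun x => a x && ~~ b x) s + count (fun x => a x && b x) s)%N.
Proof. by elim: s => //= x s ->; case: (a x); case: (b x) => /=; lia. Qed.

Lemma rho_Wd k n (P : pred (word k)) : rho n P = (\sum_(l < n.+1) count P (Wd k l))%N.
Proof. by apply: eq_bigr => l _; rewrite cnt_Wd. Qed.

Lemma HH_bounds dd l : (0 < dd)%N -> (HH dd l <= l)%N /\ (l <= 3 * dd * (HH dd l + 2))%N.
Proof.
move=> d0; have D0 : (0 < 3 * dd)%N by lia.
split; first by rewrite /HH; apply: leq_trans (leq_div _ _) _; apply: leq_subr.
have E := divn_eq (l - 3 * dd) (3 * dd).
have M := ltn_pmod (l - 3 * dd) D0.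
rewrite /HH; move: E M; move: ((l - 3 * dd) %/ (3 * dd))%N ((l - 3 * dd) %% (3 * dd))%N => q r E M.
nia.
Qed.

Theorem lemma4p6 (k : nat) (lam : R) (p : {perm letter k}) :
  (1 < k)%N -> 0 < lam -> lam < 3^-1 ->
  relabeling p -> p != 1%g ->
  exp_negligible (Sprime lam p) (@cyc_reduced k).
Proof.
move=> k1 lam0 lam3 _ _.
set K := ((k * 2).-1)%N.
have K3 : (3 <= K)%N by rewrite /K; lia.
have Kr3 : 3 <= K%:R :> R by rewrite ler_nat.
set dd := maxn 2 (Num.bound lam^-1).
have d2 : (2 <= dd)%N by rewrite leq_maxl.
have dlam : 1 <= dd%:R * lam.
  have il0 : 0 < lam^-1 by rewrite invr_gt0.
  have Hb := archi_boundP (ltW il0).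
  have Hd : lam^-1 <= dd%:R.
    apply: le_trans (ltW Hb) _; rewrite ler_nat; exact: leq_maxr.
  apply: le_trans (_ : lam^-1 * lam <= _); first by rewrite mulVf // gt_eqF.
  by rewrite ler_wpM2r // ltW.
clearbody dd.
set D := (3 * dd)%N.
have D0 : (0 < D)%N by rewrite /D; lia.
have Dr : 1 <= D%:R :> R by rewrite ler1n.
set eps : R := (2 * D%:R)^-1.
have eps0 : 0 < eps by rewrite invr_gt0; lra.
have eps1 : eps <= 2^-1.
  rewrite /eps invfM; apply: le_trans (_ : 2^-1 * 1 <= _); last by rewrite mulr1.
  rewrite ler_wpM2l //; first lra.
  by rewrite invf_le1 //; lra.
set th := 1 + eps.
have thD : th ^+ D <= K%:R by apply: le_trans (theta_pow _ D0) _; lra.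
set e := eps / 4.
have e0 : 0 < e by rewrite /e; lra.
set be := (1 + e) ^+ 3.
have be0 : 0 < be by rewrite exprn_gt0 //; lra.
have beth : be < th by rewrite /be /th /e !exprS expr0 mulr1; nra.
have th1 : 1 <= th by rewrite /th; lra.
have thK : th <= K%:R by rewrite /th; lra.
have th0 : 0 < th by lra.
exists (4 * K%:R ^+ 3 * e^-3 * be), (be / th).
split.
  have Kr0' : 0 < K%:R :> R by lra.
  rewrite !mulr_gt0 // ?exprn_gt0 //; try lra.
  by rewrite Num.Theory.invr_gt0 exprn_gt0.
split.
  rewrite divr_gt0 //= ltr_pdivrMr // mul1r //.
move=> n.
have HT : rho n (@cyc_reduced k) =
    (rho n [pred x | cyc_reduced x && ~~ Sprime lam p x] +
     \sum_(l < n.+1) count (bad lam p) (Wd k l))%N.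
  rewrite !rho_Wd -big_split; apply: eq_bigr => l _; exact: count_split.
move: HT.
set T := rho n _; set G := rho n _; set B := (\sum_(l < n.+1) _)%N => HT.
have TK : (K ^ n <= K * T)%N.
  apply: leq_trans (CR_lower n k1) _; rewrite leq_mul2l; apply/orP; right.
  rewrite /T rho_Wd (bigD1 ord_max) //=; exact: leq_addr.
clearbody T G.
have Kr0 : 0 < K%:R :> R by lra.
have T0 : 0 < T%:R :> R.
  rewrite ltr0n lt0n; apply/negP => /eqP T0.
  by move: TK; rewrite T0 muln0 leqn0 expn_eq0 => /andP [/eqP K0 _]; rewrite K0 in K3.
have h2 : K%:R ^+ n <= K%:R * T%:R :> R by rewrite -natrX -natrM ler_nat.
have h3 := poly_exp n e0.
have BB : B%:R * th ^+ n <= (n.+1 * (n.+1 * n.+1 * 4))%:R * K%:R ^+ (n + 2).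
  rewrite /B natr_sum mulr_suml.
  apply: le_trans (_ : \sum_(l < n.+1) ((n.+1 * n.+1 * 4)%:R * K%:R ^+ (n + 2)) <= _); last first.
    rewrite sumr_const card_ord -mulrnAl -mulr_natr -natrM.
    by rewrite [(_ * n.+1)%N]mulnC.
  apply: ler_sum => l _.
  have bc := bad_count p l k1 d2 (ltW lam0) dlam.
  have d0 : (0 < dd)%N := ltnW d2.
  have [Hl lD] := HH_bounds l d0.
  have ln : (l <= n)%N by rewrite -ltnS.
  apply: le_trans (_ : ((l.+1 * l.+1 * 4)%:R * ((K ^ (l - HH dd l))%:R * th ^+ n)) <= _).
    rewrite mulrA -natrM; apply: ler_wpM2r; first exact: exprn_ge0 (ltW th0).
    by rewrite ler_nat -mulnA.
  apply: ler_pM.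
  - by [].
  - by rewrite mulr_ge0 // exprn_ge0 // ltW.
  - rewrite ler_nat; have ln' : (l.+1 <= n.+1)%N := ltn_ord l.
    exact: (leq_mul (leq_mul ln' ln') (leqnn 4)).
  exact: (pow_bound th1 thK thD ln lD Hl).
clearbody B.
have S : B%:R * th ^+ n <= 4 * K%:R ^+ 3 * e^-3 * be * be ^+ n * T%:R.
  apply: le_trans BB _.
  have E1 : (n.+1 * (n.+1 * n.+1 * 4))%:R = 4 * n.+1%:R ^+ 3 :> R.
    by rewrite !natrM; ring.
  rewrite E1.
  apply: le_trans (_ : 4 * (e^-3 * be ^+ n.+1) * K%:R ^+ (n + 2) <= _).
    apply: ler_wpM2r; first exact: exprn_ge0 (ltW Kr0).
    by apply: ler_wpM2l => //; exact: h3.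
  set W := 4 * (e^-3 * be) * K%:R ^+ 2.
  have ei : 0 <= e^-3 by rewrite Num.Theory.invr_ge0 exprn_ge0 // ltW.
  have W0 : 0 <= W.
    apply: mulr_ge0; last exact: exprn_ge0 (ltW Kr0).
    by apply: mulr_ge0; [| exact: mulr_ge0 ei (ltW be0)].
  have -> : 4 * (e^-3 * be ^+ n.+1) * K%:R ^+ (n + 2) = (W * be ^+ n) * K%:R ^+ n.
    rewrite /W (exprS be) (exprD (K%:R)). ring.
  have -> : 4 * K%:R ^+ 3 * e^-3 * be * be ^+ n * T%:R = (W * be ^+ n) * (K%:R * T%:R).
    by rewrite /W; ring.
  apply: ler_wpM2l => //; rewrite mulr_ge0 // exprn_ge0 //; exact: ltW.
have GE : G%:R = T%:R - B%:R :> R by rewrite HT natrD addrK.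
have thn : 0 < th ^+ n by rewrite exprn_gt0.
have -> : G%:R / T%:R - 1 = - (B%:R / T%:R) :> R.
  by rewrite GE; field; rewrite gt_eqF.
rewrite normrN ger0_norm; last by rewrite divr_ge0 // ltW.
rewrite ler_pdivrMr // [(be / th) ^+ n]expr_div_n.
have -> : 4 * K%:R ^+ 3 * e^-3 * be * (be ^+ n / th ^+ n) * T%:R =
          (4 * K%:R ^+ 3 * e^-3 * be * be ^+ n * T%:R) / th ^+ n :> R.
  by field; rewrite !gt_eqF.
by rewrite ler_pdivlMr.
Qed.
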